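(* Fix a starting price $s\in[0,1]$ and consider symmetric equilibria of the Istanbul Flower Auction of the following form. There is a cutoff $p(s)\in[s,1]$ such that a bidder bids at the starting price iff her value $v\ge p(s)$, and otherwise waits. A waiting bidder with value $v$ bids $\beta(v,s)$ in the Dutch phase, where $\beta(v,s)=b(v,s)$ for $v\le\lambda(s)$ and $\beta(v,s)=s$ for $\lambda(s)\le v\le p(s)$. Here $\lambda(s)\le p(s)$, and $b(\cdot,s)$ is strictly increasing and differentiable with $b(0,s)=0$ and values in $[0,s]$. Ties at the price $s$ in the Dutch phase are broken uniformly at random. Then in any such equilibrium $\lambda(s)=p(s)$. Consequently, in the Dutch phase a tie occurs with probability zero. Moreover, suppose $p(s)<1$. The cutoff is pinned down by the indifference condition of a bidder with value $p(s)$ between bidding and waiting, i.e. $c(s-b(p,s))\,p-b(p,s)=p-s$. Then $p(s)$ is the unique solution $p$ of $b(p,s)=s$, and no other $p\in[s,p(s))$ satisfies this indifference condition. When $p(s)=1$, we have $b(1,s)\le s$.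
   Context: Single indivisible item, $n\ge2$ bidders. Private values are i.i.d. on $[0,1]$ with twice differentiable CDF $F$ and density $f$. Write $G(v)=F^{n-1}(v)$ and $g=G'$. Time cost: a differentiable function $c:[0,1]\to\mathbb{R}_+$ with $c(0)=1$ and $c'(t)>-1$. Either $c\equiv1$ (''no time cost''), or $c'(t)<0$ for all $t$ (''there is a time cost''). If a bidder with value $v$ wins at price $p$ after auction duration $t$, her utility is $c(t)v-p$ and the auctioneer receives $p$; losers get $0$. Istanbul Flower Auction with starting price $s\in[0,1]$: bidders simultaneously decide, at no time cost, whether to bid at $s$. - If nobody bids, a Dutch phase follows: the price descends from $s$ until someone bids, and the duration is $t=s-p$ at selling price $p$. - If at least one bids, an English phase among the initial bidders follows: the price ascends from $s$ until the second-to-last initial bidder leaves, and the duration is $t=p-s$. If exactly one bids, the sale is at $s$ with duration $0$. The Dutch-phase first-order condition is $$\frac{\partial b(v,s)}{\partial v}=\frac{g(v)}{G(v)}\,\frac{c(s-b(v,s))v-b(v,s)}{1+c'(s-b(v,s))v},\qquad b(0,s)=0.$$ In the English phase a bidder of value $v\ge p(s)$ stays in until the price $m(v,s)$, defined by $c(m(v,s)-s)v-m(v,s)=0$. A bidder with value $v\ge p(s)$ who bids at $s$ has expected utility $(v-s)G(p(s))+\int_{p(s)}^v[c(m(x,s)-s)v-m(x,s)]\,dG(x)$; at $v=p(s)$ this equals $(p(s)-s)G(p(s))$. *)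

(* Defs.v *)
From Stdlib Require Import Reals Lra ClassicalEpsilon.
From Coquelicot Require Import Coquelicot.
Open Scope R_scope.

Definition prob1 (f : R -> R) (A : R -> Prop) : R :=
  RInt (fun x => if excluded_middle_informative (A x) then f x else 0) 0 1.

Definition Gcdf (F : R -> R) (n : nat) (v : R) : R := F v ^ (n - 1)%nat.
Definition gdens (F f : R -> R) (n : nat) (x : R) : R :=
  INR (n - 1)%nat * F x ^ (n - 2)%nat * f x.

(* Symmetric strategy of the other n-1 bidders: value x >= p bids at the
   starting price s; value x < p waits and bids beta x in the Dutch phase.
   Probability that a (deviating) bidder who waits and places Dutch bid d wins,
   when ties are broken uniformly at random: each of the n-1 others
   independently waits with a strictly lower bid (prob. a) or waits with the
   same bid (prob. t); with k tied rivals she wins with probability 1/(k+1). *)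
Definition dutch_win_prob (n : nat) (f : R -> R) (p : R) (beta : R -> R) (d : R) : R :=
  let a := prob1 f (fun x => x < p /\ beta x < d) in
  let t := prob1 f (fun x => x < p /\ beta x = d) in
  sum_f_R0 (fun k => Binomial.C (n - 1)%nat k * a ^ (n - 1 - k)%nat * t ^ k / INR (k + 1)%nat)
    (n - 1)%nat.

(* Expected utility of a bidder of value v who waits and bids d in the Dutch
   phase (duration s - d, price d). *)
Definition wait_payoff (n : nat) (f c : R -> R) (s p : R) (beta : R -> R) (v d : R) : R :=
  (c (s - d) * v - d) * dutch_win_prob n f p beta d.

(* For v >= p this is the formula of the paper
     (v - s) G(p) + int_p^v [c(m(x,s)-s) v - m(x,s)] dG(x);
   for v < p she cannot win the English phase against initial bidders
   (all of value >= p) at a price she would accept, so she only wins when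
   nobody else bids at s: (v - s) G(p). *)
Definition enter_payoff (n : nat) (F f c : R -> R) (s p : R) (m : R -> R) (v : R) : R :=
  (v - s) * Gcdf F n p +
  (if Rle_dec p v
   then RInt (fun x => (c (m x - s) * v - m x) * gdens F f n x) p v
   else 0).

Definition IFA_sym_equilibrium (n : nat) (F f c : R -> R) (s p : R)
    (beta m : R -> R) : Prop :=
  (forall v, 0 <= v <= 1 -> p <= v ->
     forall d, 0 <= d <= s ->
       wait_payoff n f c s p beta v d <= enter_payoff n F f c s p m v) /\
  (forall v, 0 <= v <= 1 -> v < p ->
     enter_payoff n F f c s p m v <= wait_payoff n f c s p beta v (beta v) /\
     forall d, 0 <= d <= s ->
       wait_payoff n f c s p beta v d <= wait_payoff n f c s p beta v (beta v)).

Definition dutch_pair_tie_prob (f : R -> R) (p : R) (beta : R -> R) : R :=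
  RInt (fun x => if Rlt_dec x p
                 then f x * prob1 f (fun y => y < p /\ beta y = beta x)
                 else 0) 0 1.

(* Main.v *)
Require Import Defs.
From Stdlib Require Import Reals Lra Lia Arith ClassicalEpsilon.
From Coquelicot Require Import Coquelicot.
Open Scope R_scope.

Lemma rint0 (g : R -> R) a b : a <= b -> (forall x, a < x < b -> g x = 0) -> is_RInt g a b 0.
Proof.
  intros Hab H.
  apply (is_RInt_ext (fun _ => 0)).
  { intros x Hx. rewrite Rmin_left in Hx by lra. rewrite Rmax_right in Hx by lra. symmetry; apply H; lra. }
  assert (E : scal (b - a) 0 = 0) by (unfold scal; simpl; unfold mult; simpl; apply Rmult_0_r).
  pose proof (is_RInt_const a b 0) as K. exact (eq_ind _ (fun l => is_RInt (fun _ : R => 0) a b l) K _ E).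
Qed.

Lemma rintf (F f g : R -> R) a b : 0 <= a <= b -> b <= 1 ->
  (forall x, 0 <= x <= 1 -> is_derive F x (f x)) ->
  (forall x, 0 <= x <= 1 -> ex_derive f x) ->
  (forall x, a < x < b -> g x = f x) -> is_RInt g a b (F b - F a).
Proof.
  intros Ha Hb HF Hf H.
  apply (is_RInt_ext f).
  { intros x Hx. rewrite Rmin_left in Hx by lra. rewrite Rmax_right in Hx by lra. symmetry; apply H; lra. }
  apply (is_RInt_derive F f).
  - intros x Hx. rewrite Rmin_left in Hx by lra. rewrite Rmax_right in Hx by lra. apply HF; lra.
  - intros x Hx. rewrite Rmin_left in Hx by lra. rewrite Rmax_right in Hx by lra.
    apply (@ex_derive_continuous R_AbsRing R_NormedModule f x), Hf; lra.
Qed.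

Lemma C_pos N k : 0 < Binomial.C N k.
Proof.
  unfold Binomial.C. apply Rdiv_lt_0_compat.
  - apply lt_0_INR, lt_O_fact.
  - apply Rmult_lt_0_compat; apply lt_0_INR, lt_O_fact.
Qed.

Lemma W_bounds (N : nat) a t : (1 <= N)%nat -> 0 <= a -> 0 < t ->
  0 < sum_f_R0 (fun k => Binomial.C N k * a ^ (N - k) * t ^ k / INR (k + 1)) N < (a + t) ^ N.
Proof.
  intros HN Ha Ht.
  destruct N as [|N']; [lia|].
  assert (Hnn : forall k, 0 <= Binomial.C (S N') k * a ^ (S N' - k) * t ^ k / INR (k + 1)).
  { intros k. apply Rmult_le_pos; [|left; apply Rinv_0_lt_compat, lt_0_INR; lia].
    apply Rmult_le_pos; [apply Rmult_le_pos|]; [left; apply C_pos| apply pow_le; lra| apply pow_le; lra]. }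
  assert (HB : 0 < Binomial.C (S N') (S N') * a ^ (S N' - S N') * t ^ (S N')).
  { rewrite Nat.sub_diag. simpl pow at 1. rewrite Rmult_1_r.
    apply Rmult_lt_0_compat; [apply C_pos| apply pow_lt; lra]. }
  assert (HI : 1 < INR (S N' + 1)). { rewrite plus_INR, S_INR. simpl. generalize (pos_INR N'); lra. }
  rewrite tech5. cbv beta. split.
  - assert (0 <= sum_f_R0 (fun k : nat => Binomial.C (S N') k * a ^ (S N' - k) * t ^ k / INR (k + 1)) N') by (apply cond_pos_sum; auto).
    assert (0 < Binomial.C (S N') (S N') * a ^ (S N' - S N') * t ^ S N' / INR (S N' + 1)) by (apply Rdiv_lt_0_compat; lra).
    lra.
  - rewrite (Rplus_comm a t), binomial, tech5. cbv beta.
    apply Rplus_le_lt_compat.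
    + apply sum_Rle. intros k _.
      assert (0 <= Binomial.C (S N') k * a ^ (S N' - k) * t ^ k).
      { apply Rmult_le_pos; [apply Rmult_le_pos|]; [left; apply C_pos| apply pow_le; lra| apply pow_le; lra]. }
      assert (1 <= INR (k+1)). { rewrite plus_INR. simpl. generalize (pos_INR k); lra. }
      replace (Binomial.C (S N') k * t ^ k * a ^ (S N' - k)) with (Binomial.C (S N') k * a ^ (S N' - k) * t ^ k) by ring.
      unfold Rdiv. rewrite <- (Rmult_1_r (_ * t ^ k)) at 2.
      apply Rmult_le_compat_l; auto.
      rewrite <- Rinv_1. apply Rinv_le_contravar; lra.
    + replace (Binomial.C (S N') (S N') * t ^ S N' * a ^ (S N' - S N')) with (Binomial.C (S N') (S N') * a ^ (S N' - S N') * t ^ S N') by ring.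
      unfold Rdiv. rewrite <- (Rmult_1_r (_ * t ^ S N')) at 2.
      apply Rmult_lt_compat_l; auto.
      rewrite <- Rinv_1. apply Rinv_lt_contravar; lra.
Qed.

Lemma W_zero (N : nat) : (1 <= N)%nat ->
  sum_f_R0 (fun k => Binomial.C N k * 0 ^ (N - k) * 0 ^ k / INR (k + 1)) N = 0.
Proof.
  intros HN.
  rewrite (sum_eq _ (fun _ => 0)).
  - clear. induction N; simpl; [lra|]. rewrite IHN; lra.
  - intros i Hi. rewrite Rmult_assoc, <- pow_add.
    replace (N - i + i)%nat with N by lia. rewrite pow_i by lia. unfold Rdiv. ring.
Qed.

Lemma cost_lb (c c' : R -> R) d : 0 < d <= 1 ->
  c 0 = 1 ->
  (forall t, 0 <= t <= 1 -> is_derive c t (c' t)) ->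
  (forall t, 0 <= t <= 1 -> -1 < c' t) -> 1 - d < c d.
Proof.
  intros Hd H0 Hc Hc'.
  destruct (MVT_gen c 0 d c') as [x [Hx Heq]].
  - intros x Hx. rewrite Rmin_left in Hx by lra. rewrite Rmax_right in Hx by lra. apply Hc; lra.
  - intros x Hx. rewrite Rmin_left in Hx by lra. rewrite Rmax_right in Hx by lra.
    apply continuity_pt_filterlim. apply (@ex_derive_continuous R_AbsRing R_NormedModule c x). eexists. apply Hc; lra.
  - rewrite Rmin_left in Hx by lra. rewrite Rmax_right in Hx by lra.
    assert (-1 < c' x) by (apply Hc'; lra).
    rewrite H0 in Heq. nra.
Qed.

Lemma rint_split (g : R -> R) a m b l1 l2 :
  is_RInt g a m l1 -> is_RInt g m b l2 -> RInt g a b = l1 + l2.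
Proof. intros H1 H2. apply is_RInt_unique. exact (is_RInt_Chasles g a m b l1 l2 H1 H2). Qed.

Theorem lemma1 (n : nat) (F f c c' : R -> R) (s p lam : R) (b beta m : R -> R) :
  (2 <= n)%nat ->
  F 0 = 0 -> F 1 = 1 ->
  (forall x y, 0 <= x -> x < y -> y <= 1 -> F x < F y) ->
  (forall x, 0 <= x <= 1 -> is_derive F x (f x)) ->
  (forall x, 0 <= x <= 1 -> ex_derive f x) ->
  c 0 = 1 ->
  (forall t, 0 <= t <= 1 -> 0 <= c t) ->
  (forall t, 0 <= t <= 1 -> is_derive c t (c' t)) ->
  (forall t, 0 <= t <= 1 -> -1 < c' t) ->
  ((forall t, 0 <= t <= 1 -> c t = 1) \/ (forall t, 0 <= t <= 1 -> c' t < 0)) ->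
  0 <= s <= 1 ->
  s <= p <= 1 ->
  0 <= lam <= p ->
  (forall x y, 0 <= x -> x < y -> y <= 1 -> b x < b y) ->
  (forall v, 0 <= v <= 1 -> ex_derive b v) ->
  b 0 = 0 ->
  (forall v, 0 <= v <= lam -> 0 <= b v <= s) ->
  (forall v, 0 <= v <= lam -> beta v = b v) ->
  (forall v, lam <= v <= p -> beta v = s) ->
  (forall v, p <= v <= 1 -> s <= m v <= 1 /\ c (m v - s) * v - m v = 0) ->
  IFA_sym_equilibrium n F f c s p beta m ->
  lam = p /\
  dutch_pair_tie_prob f p beta = 0 /\
  (p < 1 -> c (s - b p) * p - b p = p - s ->
     b p = s /\
     (forall q, 0 <= q <= 1 -> b q = s -> q = p) /\
     (forall q, s <= q < p -> c (s - b q) * q - b q <> q - s)) /\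
  (p = 1 -> b 1 <= s).
Proof.
  intros Hn HF0 HF1 HFm HFd Hfd Hc0 Hcpos Hcd Hc' Hcase Hs Hp Hlam Hbm Hbd Hb0 Hbr Hbe1 Hbe2 Hm Heq.
  assert (Hblam : b lam = s).
  { rewrite <- (Hbe1 lam) by lra. apply Hbe2; lra. }
  assert (HN : (1 <= n - 1)%nat) by lia.
  assert (Hlp : lam = p).
  { destruct (Req_dec lam p) as [E|Hne]; [exact E|]. exfalso.
    assert (Hlt : lam < p) by lra.
    assert (Ha : prob1 f (fun x => x < p /\ beta x < s) = F lam).
    { unfold prob1. rewrite (rint_split _ 0 lam 1 (F lam - F 0) 0).
      - rewrite HF0; ring.
      - apply (rintf F f); try lra; auto. intros x Hx.
        destruct (excluded_middle_informative _) as [_|N]; [reflexivity|].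
        exfalso; apply N. split; [lra|]. rewrite Hbe1 by lra. rewrite <- Hblam. apply Hbm; lra.
      - apply rint0; [lra|]. intros x Hx.
        destruct (excluded_middle_informative _) as [[H1 H2]|_]; [|reflexivity].
        rewrite Hbe2 in H2 by lra. lra. }
    assert (Ht : prob1 f (fun x => x < p /\ beta x = s) = F p - F lam).
    { unfold prob1. rewrite (rint_split _ 0 lam 1 0 (F p - F lam)); [ring| |].
      - apply rint0; [lra|]. intros x Hx.
        destruct (excluded_middle_informative _) as [[H1 H2]|_]; [|reflexivity].
        rewrite Hbe1 in H2 by lra. assert (b x < b lam) by (apply Hbm; lra). lra.
      - replace (F p - F lam) with ((F p - F lam) + 0) by ring.
        apply (@is_RInt_Chasles R_NormedModule _ lam p 1 (F p - F lam) 0).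
        + apply (rintf F f); try lra; auto. intros x Hx.
          destruct (excluded_middle_informative _) as [_|N]; [reflexivity|].
          exfalso; apply N. split; [lra|]. apply Hbe2; lra.
        + apply rint0; [lra|]. intros x Hx.
          destruct (excluded_middle_informative _) as [[H1 H2]|_]; [|reflexivity]. lra. }
    assert (HFl : 0 <= F lam).
    { destruct (Req_dec lam 0) as [->|]; [lra|]. rewrite <- HF0. left; apply HFm; lra. }
    assert (HFt : 0 < F p - F lam) by (assert (F lam < F p) by (apply HFm; lra); lra).
    destruct (W_bounds (n - 1) (F lam) (F p - F lam) HN HFl HFt) as [Wpos Wlt].
    replace (F lam + (F p - F lam)) with (F p) in Wlt by ring.
    assert (HW : dutch_win_prob n f p beta s =
       sum_f_R0 (fun k => Binomial.C (n - 1) k * F lam ^ (n - 1 - k) * (F p - F lam) ^ k / INR (k + 1)) (n - 1)).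
    { unfold dutch_win_prob; cbv zeta. rewrite Ha, Ht. reflexivity. }
    destruct Heq as [_ Heq2].
    destruct (Rlt_or_le s p) as [Hsp|Hps].
    + set (v := (Rmax lam s + p) / 2).
      assert (Hv1 : Rmax lam s < v < p) by (unfold v; generalize (Rmax_Rlt lam s p); intros [_ K]; assert (Rmax lam s < p) by (apply K; lra); lra).
      assert (lam < v /\ s < v) by (generalize (Rmax_l lam s) (Rmax_r lam s); lra).
      destruct (Heq2 v ltac:(lra) ltac:(lra)) as [Hen _].
      unfold enter_payoff, wait_payoff, Gcdf in Hen.
      destruct (Rle_dec p v) as [|_]; [lra|].
      rewrite (Hbe2 v) in Hen by lra. rewrite HW in Hen.
      replace (s - s) with 0 in Hen by ring. rewrite Hc0 in Hen.
      assert (v - s > 0) by lra. nra.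
    + assert (Hsp : s = p) by lra.
      set (v := (lam + p) / 2).
      assert (lam < v < p) by (unfold v; lra).
      destruct (Heq2 v ltac:(lra) ltac:(lra)) as [_ Hd].
      specialize (Hd 0 ltac:(lra)).
      unfold wait_payoff in Hd.
      rewrite (Hbe2 v) in Hd by lra. rewrite HW in Hd.
      replace (s - s) with 0 in Hd by ring. rewrite Hc0 in Hd.
      assert (Hpos : forall x, 0 < x < 1 -> x < p -> 0 < beta x).
      { intros x Hx Hxp. destruct (Rle_lt_dec x lam).
        - rewrite Hbe1 by lra. rewrite <- Hb0. apply Hbm; lra.
        - rewrite Hbe2 by lra. lra. }
      assert (HW0 : dutch_win_prob n f p beta 0 = 0).
      { unfold dutch_win_prob; cbv zeta.
        assert (E1 : prob1 f (fun x => x < p /\ beta x < 0) = 0).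
        { unfold prob1. apply is_RInt_unique. apply rint0; [lra|]. intros x Hx.
          destruct (excluded_middle_informative _) as [[H1 H2]|_]; [|reflexivity].
          specialize (Hpos x Hx H1). lra. }
        assert (E2 : prob1 f (fun x => x < p /\ beta x = 0) = 0).
        { unfold prob1. apply is_RInt_unique. apply rint0; [lra|]. intros x Hx.
          destruct (excluded_middle_informative _) as [[H1 H2]|_]; [|reflexivity].
          specialize (Hpos x Hx H1). lra. }
        rewrite E1, E2. apply W_zero; auto. }
      rewrite HW0 in Hd. assert (v - s < 0) by lra. nra. }
  subst lam.
  split; [reflexivity|].
  split.
  { unfold dutch_pair_tie_prob. apply is_RInt_unique. apply rint0; [lra|].
    intros x Hx. destruct (Rlt_dec x p) as [Hxp|]; [|reflexivity].
    replace (prob1 f (fun y => y < p /\ beta y = beta x)) with 0; [ring|].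
    symmetry. unfold prob1. rewrite (rint_split _ 0 x 1 0 0); [ring| |].
    - apply rint0; [lra|]. intros y Hy.
      destruct (excluded_middle_informative _) as [[H1 H2]|_]; [|reflexivity].
      rewrite !Hbe1 in H2 by lra. assert (b y < b x) by (apply Hbm; lra). lra.
    - apply rint0; [lra|]. intros y Hy.
      destruct (excluded_middle_informative _) as [[H1 H2]|_]; [|reflexivity].
      rewrite !Hbe1 in H2 by lra. assert (b x < b y) by (apply Hbm; lra). lra. }
  split.
  { intros Hp1 Hind. split; [exact Hblam|]. split.
    - intros q Hq Hbq. destruct (Rtotal_order q p) as [H|[H|H]]; auto.
      + assert (b q < b p) by (apply Hbm; lra). lra.
      + assert (b p < b q) by (apply Hbm; lra). lra.
    - intros q Hq Heqq.
      assert (Hbq : b q < b p) by (apply Hbm; lra).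
      assert (Hbq0 : 0 <= b q) by (apply Hbr; lra).
      assert (Hcl : 1 - (s - b q) < c (s - b q)) by (apply (cost_lb c c'); auto; lra).
      set (d := s - b q) in *. assert (0 < d) by (unfold d; lra).
      assert (b q = s - d) by (unfold d; ring).
      rewrite H0 in Heqq. nra. }
  intros ->. apply Hbr. lra.
Qed.
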